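(* Under the same setting, let $\bm u_0^m,\bm u_1^m\in\mathbb R^d$, $\eta_0^m,\eta_1^m>0$, $\alpha\in[0,1]$, $\lambda_{ij}=\dfrac{\Delta t S_{ij}}{1+\alpha\Delta t(S_{ij}+S_{ji})}$, and assume either $\Delta t S_{01},\Delta t S_{10}\le 1$ or $\alpha=1$. Define $\eta_i^{n+1}$ by $\eta_0^{n+1}=(1-\lambda_{01})\eta_0^m+\lambda_{10}\eta_1^m$, $\eta_1^{n+1}=(1-\lambda_{10})\eta_1^m+\lambda_{01}\eta_0^m$, momenta $\bm F_0^{n+1}=(1-\lambda_{01})\eta_0^m\bm u_0^m+\lambda_{10}\eta_1^m\bm u_1^m$, $\bm F_1^{n+1}=(1-\lambda_{10})\eta_1^m\bm u_1^m+\lambda_{01}\eta_0^m\bm u_0^m$, and $\bm u_i^{n+1}=\bm F_i^{n+1}/\eta_i^{n+1}$ (assuming $\eta_i^{n+1}>0$). Then total momentum is conserved and the total kinetic energy does not increase: $$\sum_{i=0}^1\tfrac12\eta_i^{n+1}|\bm u_i^{n+1}|^2\le\sum_{i=0}^1\tfrac12\eta_i^m|\bm u_i^m|^2.$$ More precisely, the kinetic energy decreases by $\Delta K=\tfrac12\mu\,|\bm u_0^m-\bm u_1^m|^2\ge 0$, where $$\mu=\frac{\eta_0^m\eta_1^m\left[(1-\lambda_{01})\lambda_{01}\eta_0^m+(1-\lambda_{10})\lambda_{10}\eta_1^m\right]}{\left[\lambda_{01}\eta_0^m+(1-\lambda_{10})\eta_1^m\right]\left[\lambda_{10}\eta_1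^m+(1-\lambda_{01})\eta_0^m\right]}.$$
   Context: ''Method 2'' (mass-weighted) momentum transfers for a two-fluid system (fluids 0 and 1), with the same implicitness weight $\alpha$ for mass and momentum transfers. $\eta_i$ is the mass per unit volume of fluid $i$, $\bm u_i$ its velocity, $S_{ij}\ge0$ the mass transfer rate from fluid $i$ to fluid $j$, $\Delta t$ the timestep; superscript $m$ denotes values before the transfer step, $n+1$ after. The kinetic energy of the two-fluid system is $\sum_i \frac12\eta_i|\bm u_i|^2$. *)

(* Defs.v *)
From HB Require Import structures.
From mathcomp Require Import all_boot all_order all_algebra.
Set Implicit Arguments. Unset Strict Implicit. Unset Printing Implicit Defensive.
Import Order.TTheory GRing.Theory Num.Theory.
Local Open Scope ring_scope.

Definition sqnorm (R : realFieldType) (d : nat) (u : 'rV[R]_d) : R :=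
  \sum_(i < d) u ord0 i ^+ 2.

Definition lam (R : realFieldType) (dt alpha Sij Sji : R) : R :=
  dt * Sij / (1 + alpha * dt * (Sij + Sji)).

Definition kinE (R : realFieldType) (d : nat) (e0 e1 : R) (u0 u1 : 'rV[R]_d) : R :=
  2^-1 * e0 * sqnorm u0 + 2^-1 * e1 * sqnorm u1.

(* Main.v *)
Require Import Defs.
From HB Require Import structures.
From mathcomp Require Import all_boot all_order all_algebra.
From mathcomp Require Import ring lra.
Import Order.TTheory GRing.Theory Num.Theory.
Local Open Scope ring_scope.

Lemma kinE_sum (R : realFieldType) (d : nat) (e0 e1 : R) (u0 u1 : 'rV[R]_d) :
  kinE e0 e1 u0 u1 = \sum_(i < d) (2^-1 * e0 * u0 ord0 i ^+ 2 + 2^-1 * e1 * u1 ord0 i ^+ 2).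
Proof. by rewrite /kinE /sqnorm big_split /= !mulr_sumr. Qed.

Lemma lam_bounds (R : realFieldType) (dt alpha Sij Sji : R) :
  0 < dt -> 0 <= Sij -> 0 <= Sji -> 0 <= alpha <= 1 ->
  (dt * Sij <= 1 \/ alpha = 1) ->
  0 <= lam dt alpha Sij Sji <= 1.
Proof.
move=> hdt hij hji /andP[ha0 ha1] hor; rewrite /lam.
have hS : 0 <= alpha * dt * (Sij + Sji).
  by apply: mulr_ge0; [apply: mulr_ge0; lra | lra].
have hD : 0 < 1 + alpha * dt * (Sij + Sji) by lra.
have hn : 0 <= dt * Sij by apply: mulr_ge0; lra.
apply/andP; split; first by apply: divr_ge0; lra.
rewrite ler_pdivrMr // mul1r.
case: hor => [h|->].
  lra.
rewrite mul1r mulrDr. have : 0 <= dt * Sji by apply: mulr_ge0; lra. lra.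
Qed.

Theorem mainTheorem5 (R : realFieldType) (d : nat)
    (u0m u1m : 'rV[R]_d) (eta0m eta1m dt alpha S01 S10 : R) :
  0 < eta0m -> 0 < eta1m -> 0 < dt -> 0 <= S01 -> 0 <= S10 ->
  0 <= alpha <= 1 ->
  ((dt * S01 <= 1 /\ dt * S10 <= 1) \/ alpha = 1) ->
  let l01 := lam dt alpha S01 S10 in
  let l10 := lam dt alpha S10 S01 in
  let eta0n := (1 - l01) * eta0m + l10 * eta1m in
  let eta1n := (1 - l10) * eta1m + l01 * eta0m in
  let F0n := ((1 - l01) * eta0m) *: u0m + (l10 * eta1m) *: u1m in
  let F1n := ((1 - l10) * eta1m) *: u1m + (l01 * eta0m) *: u0m in
  0 < eta0n -> 0 < eta1n ->
  let u0n := eta0n^-1 *: F0n in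
  let u1n := eta1n^-1 *: F1n in
  let mu := eta0m * eta1m
              * ((1 - l01) * l01 * eta0m + (1 - l10) * l10 * eta1m)
            / ((l01 * eta0m + (1 - l10) * eta1m)
               * (l10 * eta1m + (1 - l01) * eta0m)) in
  let dK := 2^-1 * mu * sqnorm (u0m - u1m) in
  [/\ eta0n *: u0n + eta1n *: u1n = eta0m *: u0m + eta1m *: u1m,
      kinE eta0n eta1n u0n u1n = kinE eta0m eta1m u0m u1m - dK,
      0 <= dK &
      kinE eta0n eta1n u0n u1n <= kinE eta0m eta1m u0m u1m].
Proof.
move=> h0 h1 hdt h01 h10 ha hor l01 l10.
have /andP[l01a l01b] : 0 <= l01 <= 1.
  apply: lam_bounds => //; case: hor => [[]|]; auto.
have /andP[l10a l10b] : 0 <= l10 <= 1.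
  apply: lam_bounds => //; case: hor => [[]|]; auto.
clearbody l01 l10.
move=> eta0n eta1n F0n F1n hn0 hn1 u0n u1n mu dK.
have n0 : eta0n != 0 by rewrite gt_eqF.
have n1 : eta1n != 0 by rewrite gt_eqF.
have hmu : 0 <= mu.
  rewrite /mu; apply: divr_ge0.
    apply: mulr_ge0; first by apply: mulr_ge0; lra.
    apply: addr_ge0; apply: mulr_ge0; try apply: mulr_ge0; lra.
  apply: mulr_ge0; rewrite /eta0n /eta1n in hn0 hn1; lra.
have hdK : 0 <= dK.
  rewrite /dK; apply: mulr_ge0; first by apply: mulr_ge0; lra.
  by rewrite /sqnorm; apply: sumr_ge0 => i _; apply: sqr_ge0.
have hE : kinE eta0n eta1n u0n u1n = kinE eta0m eta1m u0m u1m - dK.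
  rewrite !kinE_sum /dK /sqnorm mulr_sumr -sumrB; apply: eq_bigr => i _.
  rewrite /u0n /u1n /F0n /F1n /mu !mxE.
  have n0' : l10 * eta1m + (1 - l01) * eta0m != 0.
    by apply: contra n0 => /eqP e; apply/eqP; rewrite /eta0n -e; ring.
  have n1' : l01 * eta0m + (1 - l10) * eta1m != 0.
    by apply: contra n1 => /eqP e; apply/eqP; rewrite /eta1n -e; ring.
  rewrite /eta0n /eta1n in n0 n1 *.
  field; rewrite ?n0 ?n1 ?n0' ?n1' //.
split => //; last lra.
rewrite /u0n /u1n !scalerA !mulfV // !scale1r /F0n /F1n.
apply/rowP => i; rewrite !mxE /eta0n /eta1n; ring.
Qed.
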